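(* Let $n\ge3$ and $0<q<1$. For every relationship network $G$ on $V$ in which at least one of the three relation types is entirely absent (i.e. $\bigcup_{i}E_i=\varnothing$, or $\bigcup_iF_i=\varnothing$, or $\bigcup_iI_i=\varnothing$), the duples mechanism selects a needy agent with probability strictly greater than $q$: $P_D(G)>q$.
   Context: Let $V=\{1,\dots,n\}$. A relationship network $G$ assigns to every unordered pair of distinct agents exactly one of the symmetric relations friends, enemies, impartial; $F_j,E_j,I_j$ are the friends, enemies, impartials of $j$. Each agent is needy independently with probability $q$; $N$ is the random needy set; every agent $j$ reports truthfully $(N,F_j,E_j)$. Duples mechanism $g^D$: for agent $l$ and $j\ne l$, $\mathrm{lev}_l(j)=1,\dots,6$ according as $j\in F_l\cap N$, $F_l\setminus N$, $I_l\cap N$, $I_l\setminus N$, $E_l\cap N$, $E_l\setminus N$. For distinct $j,k$, agent $l\notin\{j,k\}$ votes for $j$ against $k$ if $\mathrm{lev}_l(j)<\mathrm{lev}_l(k)$ (abstains if equal); $x_{jk}$ counts these votes. $g^D_j(\{j,k\})=1,\tfrac12,0$ as $x_{jk}>,=,<x_{kj}$, $g^D_k(\{j,k\})=1-g^D_j(\{j,k\})$, and $g^D_i=\frac{2}{n(n-1)}\sum_{j\ne i}g^D_i(\{i,j\})$. $P_D(G)=\mathbb E[\sum_{i\in N}g^D_i]$ under truthful reports. *)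

(* Defs.v *)
From HB Require Import structures.
From mathcomp Require Import all_boot all_order all_algebra.
Set Implicit Arguments. Unset Strict Implicit. Unset Printing Implicit Defensive.
Import Order.TTheory GRing.Theory Num.Theory.
Local Open Scope ring_scope.

Inductive relkind := Friends | Enemies | Impartial.

(* Its values on the
   diagonal are irrelevant. j \in F_l <-> G l j = Friends, etc. *)
Definition network (n : nat) := 'I_n -> 'I_n -> relkind.

Definition symmetric_network n (G : network n) : Prop :=
  forall i j : 'I_n, i != j -> G i j = G j i.

Definition lev n (G : network n) (N : {set 'I_n}) (l j : 'I_n) : nat :=
  match G l j with
  | Friends => if j \in N then 1 else 2
  | Impartial => if j \in N then 3 else 4
  | Enemies => if j \in N then 5 else 6
  end%N.

Definition votes n (G : network n) (N : {set 'I_n}) (j k : 'I_n) : nat :=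
  #|[set l : 'I_n | (l != j) && (l != k) && (lev G N l j < lev G N l k)%N]|.

Definition gpair (R : realFieldType) n (G : network n) (N : {set 'I_n}) (j k : 'I_n) : R :=
  if (votes G N k j < votes G N j k)%N then 1
  else if votes G N j k == votes G N k j then 1 / 2%:R else 0.

Definition gD (R : realFieldType) n (G : network n) (N : {set 'I_n}) (i : 'I_n) : R :=
  (2%:R / (n * (n - 1))%:R) * \sum_(j : 'I_n | j != i) gpair R G N i j.

Definition probN (R : realFieldType) n (q : R) (N : {set 'I_n}) : R :=
  q ^+ #|N| * (1 - q) ^+ (n - #|N|).

Definition PD (R : realFieldType) n (q : R) (G : network n) : R :=
  \sum_(N : {set 'I_n}) probN q N * \sum_(i in N) gD R G N i.

Definition absent n (G : network n) (k : relkind) : Prop :=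
  forall i j : 'I_n, i != j -> G i j <> k.

(* Main.v *)
Require Import Defs.
From HB Require Import structures.
From mathcomp Require Import all_boot all_order all_algebra.
From mathcomp Require Import zify ring lra.
Import Order.TTheory GRing.Theory Num.Theory.
Local Open Scope ring_scope.

Local Close Scope ring_scope.

Lemma card_sum (T : finType) (P : pred T) : #|[set x | P x]| = \sum_(x : T) (P x : nat).
Proof.
rewrite -sum1_card big_mkcond; apply: eq_bigr => x _; rewrite inE; by case: (P x).
Qed.

Lemma sum_eq_pointwise (I : finType) (a b : I -> nat) :
  (forall i, a i <= b i) -> \sum_i b i <= \sum_i a i -> forall i, a i = b i.
Proof.
move=> hab hs i; move: hs; rewrite (bigD1 i) //= [X in _ <= X](bigD1 i) //=.
have : \sum_(k | k != i) a k <= \sum_(k | k != i) b k by apply: leq_sum => k _.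
have := hab i; lia.
Qed.

Section Comb.
Variable n : nat.

Lemma sum_neq1 (i : 'I_n) : \sum_(l : 'I_n) ((l != i) : nat) = n.-1.
Proof.
rewrite -card_sum; have := cardC1 i; rewrite card_ord => <-; apply: eq_card => x; by rewrite !inE.
Qed.

Lemma sum_neq2 (i j : 'I_n) : i != j ->
  \sum_(l : 'I_n) ((l != i) && (l != j) : nat) = (n - 2)%N.
Proof.
move=> nij.
have h : \sum_(l : 'I_n) ((l != i) : nat) =
   \sum_(l : 'I_n) ((l != i) && (l != j) : nat) + \sum_(l : 'I_n) ((l == j) : nat).
  rewrite -big_split; apply: eq_bigr => l _ /=.
  case: (eqVneq l j) => [->|lj]; first by rewrite eq_sym nij.
  by rewrite andbT addn0.
have h1 : \sum_(l : 'I_n) ((l == j) : nat) = 1%N.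
  by rewrite (bigD1 j) //= eqxx big1 // => l /negbTE ->.
move: h; rewrite sum_neq1 h1; lia.
Qed.

Lemma swap_sum (F : 'I_n -> 'I_n -> nat) :
  \sum_(i : 'I_n) \sum_(j | j != i) F j i = \sum_(i : 'I_n) \sum_(j | j != i) F i j.
Proof.
under eq_bigr => i _ do rewrite big_mkcond.
rewrite exchange_big /=; apply: eq_bigr => i _; rewrite [RHS]big_mkcond /=.
by apply: eq_bigr => j _; rewrite eq_sym.
Qed.

Variable E : 'I_n -> 'I_n -> bool.
Hypothesis Esym : forall i j, i != j -> E i j = E j i.

Definition yE (i j : 'I_n) : nat :=
  \sum_(l : 'I_n) ((l != i) && (l != j) && E l j && ~~ E l i : nat).
Definition dE (l : 'I_n) : nat := \sum_(x : 'I_n) ((l != x) && E l x : nat).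
Definition eE (l : 'I_n) : nat := \sum_(x : 'I_n) ((l != x) && ~~ E l x : nat).
Definition zE (i j : 'I_n) : nat :=
  \sum_(l : 'I_n) ((l != i) && (l != j) && E l j && E l i : nat).

Lemma de_sum l : (dE l + eE l = n.-1)%N.
Proof.
rewrite /dE /eE -big_split -(sum_neq1 l); apply: eq_bigr => x _ /=.
by rewrite eq_sym; case: (x != l); case: (E l x).
Qed.

Lemma sumy : \sum_(i : 'I_n) \sum_(j | j != i) yE i j = \sum_(l : 'I_n) dE l * eE l.
Proof.
rewrite /yE.
under eq_bigr => i _ do rewrite exchange_big /=.
rewrite exchange_big /=; apply: eq_bigr => l _.
rewrite /dE /eE mulnC big_distrl /=; apply: eq_bigr => i _.
rewrite big_distrr /= big_mkcond /=; apply: eq_bigr => j _.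
case: (eqVneq j i) => [->|_] /=.
  by case: (E l i); rewrite ?andbF ?andbT ?muln0 ?mul0n.
by case: (l != i); case: (l != j); case: (E l j); case: (E l i).
Qed.

Lemma ydeg (i j : 'I_n) : i != j -> (yE i j + zE i j + E i j = dE j)%N.
Proof.
move=> nij.
have -> : dE j = \sum_(x : 'I_n) ((x != j) && E x j : nat).
  apply: eq_bigr => x _; case: (eqVneq x j) => [->|xj]; first by [].
  have jx : j != x by rewrite eq_sym.
  by rewrite /= (Esym _ _ jx).
have h1 : (E i j : nat) = \sum_(x : 'I_n) ((x == i) && E x j : nat).
  by rewrite (bigD1 i) //= eqxx big1 ?addn0 // => y /negbTE ->.
rewrite h1 /yE /zE -!big_split; apply: eq_bigr => x _ /=.
case: (eqVneq x i) => [->|xi] /=; first by rewrite nij.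
by case: (x != j); case: (E x j); case: (E x i).
Qed.

Lemma zsym i j : zE i j = zE j i.
Proof.
apply: eq_bigr => x _.
by case: (x != j); case: (x != i); case: (E x j); case: (E x i).
Qed.

Lemma ysum (i j : 'I_n) : i != j -> (yE i j + yE j i <= n - 2)%N.
Proof.
move=> nij; rewrite -(sum_neq2 _ _ nij) /yE -big_split; apply: leq_sum => x _ /=.
by case: (x != j); case: (x != i); case: (E x j); case: (E x i).
Qed.

Lemma comb : (3 <= n)%N -> exists i j : 'I_n, i != j /\
  (2 * yE i j <= n - 2)%N /\ (2 * yE j i <= n - 2)%N /\ (yE i j + yE j i <= n - 3)%N.
Proof.
move=> n3.
case: (boolP [exists i : 'I_n, exists j : 'I_n, [&& i != j, 2 * yE i j <= n - 2,
   2 * yE j i <= n - 2 & yE i j + yE j i <= n - 3]]).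
  move/existsP=> [i /existsP [j /and4P [h1 h2 h3 h4]]].
  by exists i, j.
rewrite negb_exists => /forallP H.
have H1 : forall i j : 'I_n, i != j -> (n.-1 <= 2 * (yE i j + yE j i))%N.
  move=> i j nij; move: (H i); rewrite negb_exists => /forallP /(_ j).
  rewrite nij /= => /negP hn.
  case: (leqP (2 * yE i j) (n - 2)) => a; last by lia.
  case: (leqP (2 * yE j i) (n - 2)) => b; last by lia.
  case: (leqP (yE i j + yE j i) (n - 3)) => c; last by lia.
  by exfalso; apply: hn; rewrite a b c.
have Hs : (\sum_(l : 'I_n) (dE l + eE l) ^ 2 <= \sum_(l : 'I_n) 4 * (dE l * eE l))%N.
  have e1 : \sum_(l : 'I_n) (dE l + eE l) ^ 2 =
            \sum_(i : 'I_n) \sum_(j | j != i) n.-1.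
    apply: eq_bigr => i _; rewrite de_sum sum_nat_const.
    have -> : #|[pred j : 'I_n | j != i]| = n.-1.
      by have := cardC1 i; rewrite card_ord => <-; apply: eq_card => x; rewrite !inE.
    by rewrite expnS expn1.
  have e2 : \sum_(l : 'I_n) 4 * (dE l * eE l) =
            \sum_(i : 'I_n) \sum_(j | j != i) 2 * (yE i j + yE j i).
    rewrite -big_distrr -sumy /=.
    under [RHS]eq_bigr => i _ do rewrite -big_distrr big_split /=.
    rewrite -big_distrr big_split /= (swap_sum yE); set A := \sum_(i < n) \sum_(j < n | j != i) yE i j; lia.
  rewrite e1 e2; apply: leq_sum => i _; apply: leq_sum => j ji.
  by apply: H1; rewrite eq_sym.
have Hp := sum_eq_pointwise _ (fun l => 4 * (dE l * eE l))
   (fun l => (dE l + eE l) ^ 2).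
have Hle : forall l, 4 * (dE l * eE l) <= (dE l + eE l) ^ 2.
  move=> l; rewrite -mulnn; move: (dE l) (eE l) => a b.
  case: (leqP a b) => h.
    have [c ->] : exists c, b = (a + c)%N by exists (b - a)%N; lia.
    nia.
  have [c ->] : exists c, a = (b + c)%N by exists (a - b)%N; lia.
  nia.
have Heq : forall l, dE l = eE l.
  move=> l; have := Hp Hle Hs l; rewrite /= -mulnn; nia.
have n1 : (0 < n)%N by lia.
have n2 : (1 < n)%N by lia.
pose i := Ordinal n1; pose j := Ordinal n2.
have nij : i != j by [].
have nji : j != i by [].
have yy : yE i j = yE j i.
  have h1 := ydeg i j nij; have h2 := ydeg j i nji.
  rewrite (zsym j i) (Esym _ _ nji) in h2.
  have := de_sum i; have := de_sum j; have := Heq i; have := Heq j; lia.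
have hs := ysum i j nij.
have hd := de_sum i; have hdi := Heq i.
move: (H i); rewrite negb_exists => /forallP /(_ j); rewrite nij /= => /negP hn.
exfalso; apply: hn; apply/and3P; split; lia.
Qed.
End Comb.

Local Open Scope ring_scope.

Section Prob.
Variable R : realFieldType.
Variable n : nat.

Lemma sum_sets_prod (F : 'I_n -> bool -> R) :
  \sum_(N : {set 'I_n}) \prod_(x : 'I_n) F x (x \in N)
  = \prod_(x : 'I_n) (F x true + F x false).
Proof.
have -> : \prod_(x : 'I_n) (F x true + F x false) = \prod_(x : 'I_n) \sum_(b : bool) F x b.
  apply: eq_bigr => x _; by rewrite big_bool.
rewrite bigA_distr_bigA /=.
rewrite (reindex (fun f : {ffun 'I_n -> bool} => [set x | f x])) /=.
  by apply: eq_bigr => f _; apply: eq_bigr => x _; rewrite inE.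
exists (fun N : {set 'I_n} => [ffun x => x \in N]) => [f _|N _].
  by apply/ffunP => x; rewrite ffunE inE.
by apply/setP => x; rewrite inE ffunE.
Qed.

Definition wq (q : R) (b : bool) : R := if b then q else 1 - q.

Lemma probN_prod (q : R) (N : {set 'I_n}) :
  probN q N = \prod_(x : 'I_n) wq q (x \in N).
Proof.
rewrite /probN (bigID (fun x => x \in N)) /=; symmetry.
rewrite [X in X * _](eq_bigr (fun _ => q)); last by move=> x Hx; rewrite /wq Hx.
rewrite [X in _ * X](eq_bigr (fun _ => 1 - q)); last by move=> x Hx; rewrite /wq (negbTE Hx).
rewrite !prodr_const; congr (_ * _ ^+ _).
have h := cardC N; rewrite card_ord in h.
rewrite -[X in (X - _)%N]h addKn; apply: eq_card => x; by rewrite !inE.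
Qed.

Definition ind (b : bool) : R := if b then 1 else 0.

Lemma sum_ind2 (q : R) (i j : 'I_n) (u v : bool) : i != j ->
  \sum_(N : {set 'I_n}) probN q N * (ind ((i \in N) == u) * ind ((j \in N) == v))
  = wq q u * wq q v.
Proof.
move=> nij.
pose F (x : 'I_n) (b : bool) := wq q b *
  (if x == i then ind (b == u) else if x == j then ind (b == v) else 1).
transitivity (\sum_(N : {set 'I_n}) \prod_(x : 'I_n) F x (x \in N)).
  apply: eq_bigr => N _; rewrite probN_prod /F big_split /=; congr (_ * _).
  rewrite (bigD1 i) //= (bigD1 j) 1?eq_sym //= eqxx (eq_sym j i) (negbTE nij) eqxx.
  rewrite big1 ?mulr1 // => x /andP[/negbTE -> /negbTE ->] //.
rewrite sum_sets_prod (bigD1 i) //= (bigD1 j) 1?eq_sym //= big1 ?mulr1.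
  rewrite /F eqxx (eq_sym j i) (negbTE nij) eqxx /wq /ind.
  by clear F; case: u; case: v => /=; rewrite ?mulr1 ?mulr0 ?addr0 ?add0r.
move=> x /andP[/negbTE xi /negbTE xj]; rewrite /F xi xj /wq !mulr1.
by rewrite addrC subrK.
Qed.
End Prob.

Set Implicit Arguments. Unset Strict Implicit.
Section Main.
Variable R : realFieldType.

Definition rk (t : relkind) : nat :=
  match t with Friends => 0 | Impartial => 1 | Enemies => 2 end.

Lemma levE n (G : network n) (N : {set 'I_n}) (l x : 'I_n) :
  lev G N l x = if x \in N then (2 * rk (G l x)).+1 else (2 * rk (G l x)).+2.
Proof. by rewrite /lev; case: (G l x); case: (x \in N). Qed.

Definition Yr n (G : network n) (i j : 'I_n) : nat :=
  \sum_(l : 'I_n) ((l != i) && (l != j) && (rk (G l j) < rk (G l i))%N : nat).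

Lemma votes_split n (G : network n) (N : {set 'I_n}) (i j : 'I_n) : i \in N -> j \notin N -> i != j ->
  votes G N j i = Yr G i j /\ (votes G N i j + votes G N j i = n - 2)%N.
Proof.
move=> hi hj nij.
have e1 : votes G N j i = Yr G i j.
  rewrite /votes card_sum; apply: eq_bigr => l _; rewrite !levE hi (negbTE hj).
  rewrite [(l != j) && (l != i)]andbC.
  case: (l != i); case: (l != j) => //=.
  by case: ltnP => h1; case: ltnP => h2 //; lia.
split => //.
rewrite e1 /Yr /votes card_sum -(@sum_neq2 _ _ _ nij) -big_split; apply: eq_bigr => l _ /=.
rewrite !levE hi (negbTE hj).
case: (l != i); case: (l != j) => //=.
by case: ltnP => h1; case: ltnP => h2; lia.
Qed.

Lemma Ysum n (G : network n) (i j : 'I_n) : i != j -> (Yr G i j + Yr G j i <= n - 2)%N.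
Proof.
move=> nij; rewrite -(@sum_neq2 _ _ _ nij) /Yr -big_split; apply: leq_sum => l _ /=.
case: (l != i); case: (l != j) => //=.
by case: ltnP => h1; case: ltnP => h2; lia.
Qed.

Definition phi (a b : nat) : R := if (b < a)%N then 1 else if a == b then 1 / 2%:R else 0.

Lemma gsum n (G : network n) (N : {set 'I_n}) (i j : 'I_n) : gpair R G N i j + gpair R G N j i = 1.
Proof.
rewrite /gpair; case: ltngtP => h; rewrite ?addr0 ?add0r //.
lra.
Qed.

Lemma galpha n (G : network n) (N : {set 'I_n}) (i j : 'I_n) : i \in N -> j \notin N -> i != j ->
  gpair R G N i j = phi (n - 2 - Yr G i j) (Yr G i j).
Proof.
move=> hi hj nij; have [h1 h2] := votes_split G hi hj nij.
rewrite /gpair -/(phi _ _); congr phi; lia.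
Qed.

Lemma phi_ineq m y y' : (y + y' <= m)%N -> 1 <= phi (m - y)%N y + phi (m - y')%N y'.
Proof.
move=> h; rewrite /phi.
case: (ltnP y (m - y)%N) => h1; case: (eqVneq (m - y)%N y) => h2; case: (ltnP y' (m - y')%N) => h3; case: (eqVneq (m - y')%N y') => h4; try lra; exfalso; lia.
Qed.

Lemma phi_strict m y y' : (2 * y <= m)%N -> (2 * y' <= m)%N -> (y + y' < m)%N ->
  1 < phi (m - y)%N y + phi (m - y')%N y'.
Proof.
move=> ha hb hc; rewrite /phi.
case: (ltnP y (m - y)%N) => h1; case: (eqVneq (m - y)%N y) => h2; case: (ltnP y' (m - y')%N) => h3; case: (eqVneq (m - y')%N y') => h4; try lra; exfalso; lia.
Qed.


Definition Wf n (q : R) (G : network n) (i j : 'I_n) : R :=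
  \sum_(N : {set 'I_n}) probN q N * (@ind R (i \in N) * gpair R G N i j).

Definition al n (G : network n) (i j : 'I_n) : R := phi (n - 2 - Yr G i j)%N (Yr G i j).

Lemma Wsum n q (G : network n) (i j : 'I_n) : i != j ->
  Wf q G i j + Wf q G j i = q + q * (1 - q) * (al G i j + al G j i - 1).
Proof.
move=> nij.
have nji : j != i by rewrite eq_sym.
rewrite /Wf -big_split /=.
transitivity (\sum_(N : {set 'I_n}) (probN q N * (@ind R ((i \in N) == true) * @ind R ((j \in N) == true))
   + al G i j * (probN q N * (@ind R ((i \in N) == true) * @ind R ((j \in N) == false)))
   + al G j i * (probN q N * (@ind R ((j \in N) == true) * @ind R ((i \in N) == false))))).
  apply: eq_bigr => N _.
  case hi: (i \in N); case hj: (j \in N); rewrite /ind /=.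
  - by rewrite !mul1r !mulr0 !addr0 mulr1 -mulrDr gsum mulr1.
  - rewrite (galpha G hi (negbT hj) nij) -/(al G i j).
    by rewrite !mul1r !mul0r !mulr0 !mulr1 !addr0 add0r mulrC.
  - rewrite (galpha G hj (negbT hi) nji) -/(al G j i).
    by rewrite !mul1r !mul0r !mulr0 !mulr1 !add0r mulrC.
  - by rewrite !mul0r !mulr0 !addr0.
rewrite !big_split /= -!mulr_sumr (@sum_ind2 R n q i j) // (@sum_ind2 R n q i j) //.
rewrite (@sum_ind2 R n q j i) // /wq; ring.
Qed.

Lemma PD_eq n q (G : network n) : PD q G =
  (2%:R / (n * (n - 1))%:R) * \sum_(i : 'I_n) \sum_(j | j != i) Wf q G i j.
Proof.
rewrite /PD /Wf.
transitivity (\sum_(N : {set 'I_n}) \sum_(i : 'I_n) \sum_(j | j != i)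
   (2%:R / (n * (n - 1))%:R) * (probN q N * (@ind R (i \in N) * gpair R G N i j))).
  apply: eq_bigr => N _; rewrite big_mkcond mulr_sumr; apply: eq_bigr => i _.
  rewrite /gD; case: (i \in N); rewrite /ind /=.
    rewrite mulrCA !mulr_sumr; apply: eq_bigr => j _; by rewrite mul1r.
  rewrite mulr0 big1 // => j _; by rewrite mul0r !mulr0.
rewrite exchange_big /= mulr_sumr; apply: eq_bigr => i _.
rewrite exchange_big /= mulr_sumr; apply: eq_bigr => j _.
by rewrite mulr_sumr.
Qed.

Lemma swapR n (F : 'I_n -> 'I_n -> R) :
  \sum_(i : 'I_n) \sum_(j | j != i) F j i = \sum_(i : 'I_n) \sum_(j | j != i) F i j.
Proof.
under eq_bigr => i _ do rewrite big_mkcond.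
rewrite exchange_big /=; apply: eq_bigr => i _; rewrite [RHS]big_mkcond /=.
by apply: eq_bigr => j _; rewrite eq_sym.
Qed.

Lemma cnt n (x : R) : \sum_(i : 'I_n) \sum_(j | j != i) x = (n * (n - 1))%:R * x.
Proof.
rewrite (eq_bigr (fun _ => x *+ n.-1)); last first.
  move=> i _; rewrite sumr_const; congr (_ *+ _).
  by have := cardC1 i; rewrite card_ord => <-; apply: eq_card => y; rewrite !inE.
rewrite sumr_const card_ord mulr_natl -mulrnA; congr (_ *+ _).
by rewrite mulnC subn1.
Qed.

End Main.

Definition lowb (a t : relkind) : bool :=
  match a, t with
  | Enemies, Friends | Friends, Impartial | Impartial, Friends => true
  | _, _ => false
  end.

Lemma rk_low a t1 t2 : t1 <> a -> t2 <> a -> (rk t2 < rk t1)%N = lowb a t2 && ~~ lowb a t1.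
Proof.
case: a; case: t1; case: t2 => //= h1 h2; try (by exfalso; apply: h1); by exfalso; apply: h2.
Qed.

Theorem proposition3 (R : realFieldType) (n : nat) (q : R) (G : network n) :
  (3 <= n)%N -> 0 < q -> q < 1 ->
  symmetric_network G ->
  (absent G Enemies \/ absent G Friends \/ absent G Impartial) ->
  q < PD q G.
Proof.
move=> n3 q0 q1 Gs habs.
have [a Ha] : exists a, absent G a by case: habs => [h|[h|h]]; eexists; exact: h.
pose E := fun l x : 'I_n => lowb a (G l x).
have Esym : forall i j : 'I_n, i != j -> E i j = E j i.
  by move=> i j nij; rewrite /E (Gs i j nij).
have YE : forall i j : 'I_n, Yr G i j = @yE n E i j.
  move=> i j; apply: eq_bigr => l _.
  case: (eqVneq l i) => [->|li] /=; first by rewrite ?eqxx.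
  case: (eqVneq l j) => [->|lj] /=; first by rewrite ?eqxx ?andbF.
  by rewrite (rk_low (Ha l i li) (Ha l j lj)).
have [i0 [j0 [nij0 [c1 [c2 c3]]]]] := @comb n E Esym n3.
rewrite PD_eq.
set S := \sum_(i : 'I_n) \sum_(j | j != i) Wf q G i j.
set D := \sum_(i : 'I_n) \sum_(j | j != i) (al R G i j + al R G j i - 1).
set K : R := (n * (n - 1))%:R.
have hT : S + S = K * q + q * (1 - q) * D.
  have hsw : S = \sum_(i : 'I_n) \sum_(j | j != i) Wf q G j i.
    exact: (swapR (fun a b => Wf q G b a)).
  rewrite [X in _ + X = _]hsw /S.
  rewrite -big_split /=.
  rewrite (eq_bigr (fun i => \sum_(j | j != i) (q + q * (1 - q) * (al R G i j + al R G j i - 1)))).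
    under eq_bigr => i _ do rewrite big_split /=.
    rewrite big_split /= cnt /D mulr_sumr; congr (_ + _); apply: eq_bigr => i _; by rewrite mulr_sumr.
  move=> i _; rewrite -big_split; apply: eq_bigr => j ji /=.
  by rewrite Wsum // eq_sym.
have Dpos : 0 < D.
  have s1 : 1 < al R G i0 j0 + al R G j0 i0.
    rewrite /al !YE; apply: phi_strict => //; lia.
  have hge : forall i j : 'I_n, j != i -> 0 <= al R G i j + al R G j i - 1.
    move=> i j ji; rewrite subr_ge0 /al; apply: phi_ineq; apply: Ysum; by rewrite eq_sym.
  rewrite /D (bigD1 i0) //= (bigD1 j0) 1?eq_sym //=.
  have r1 : 0 <= \sum_(j | (j != i0) && (j != j0)) (al R G i0 j + al R G j i0 - 1).
    by apply: sumr_ge0 => j /andP [h _]; apply: hge.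
  have r2 : 0 <= \sum_(i | i != i0) \sum_(j | j != i) (al R G i j + al R G j i - 1).
    by apply: sumr_ge0 => i _; apply: sumr_ge0 => j h; apply: hge.
  lra.
have Kpos : 0 < K.
  by rewrite /K ltr0n; nia.
have tpos : 0 < q * (1 - q) by apply: mulr_gt0; lra.
have hS : S = (K * q + q * (1 - q) * D) / 2%:R by rewrite -hT; field.
rewrite hS.
have -> : 2%:R / K * ((K * q + q * (1 - q) * D) / 2%:R) = q + q * (1 - q) * D / K.
  by field; rewrite !pnatr_eq0 -!lt0n; apply/andP; split; lia.
have : 0 < q * (1 - q) * D / K by apply: divr_gt0 => //; apply: mulr_gt0.
lra.
Qed.
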